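(* Let $\tilde{\mathfrak{g}}$ be a real solvable Lie algebra with a metric $\langle,\rangle$ and a pseudo-Iwasawa decomposition $\tilde{\mathfrak{g}}=\mathfrak{g}\oplus^\perp\mathfrak{a}$. Let $H\in\tilde{\mathfrak g}$ be defined by $\langle H,v\rangle=\operatorname{Tr}(\operatorname{ad}v)$ for all $v\in\tilde{\mathfrak g}$. Then the Einstein equation $\widetilde{\operatorname{Ric}}=\lambda\,\mathrm{id}$ holds on $\tilde{\mathfrak{g}}$ if and only if (1) $\mathfrak{g}$ with the induced metric satisfies $\operatorname{Ric}=\lambda\,\mathrm{id}+D$, where $D=\operatorname{ad}H|_{\mathfrak g}$; and (2) $\operatorname{Tr}(\operatorname{ad}X\circ\operatorname{ad}Y)=-\lambda\langle X,Y\rangle$ for all $X,Y\in\mathfrak{a}$. In this case $\operatorname{Tr}D^2=-\lambda\operatorname{Tr}D$.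
   Context: A metric on a Lie algebra is a nondegenerate symmetric bilinear form, possibly indefinite; $\widetilde{\operatorname{Ric}}$ and $\operatorname{Ric}$ denote the Ricci operators of the corresponding left-invariant pseudo-Riemannian metrics on the simply connected Lie groups. A standard decomposition of a metric Lie algebra $\tilde{\mathfrak g}$ is a decomposition $\tilde{\mathfrak{g}}=\mathfrak{g}\oplus^\perp\mathfrak{a}$ as an orthogonal direct sum of vector spaces, where $\mathfrak{g}$ is a nilpotent ideal and $\mathfrak{a}$ is an abelian subalgebra. It is pseudo-Iwasawa if moreover $\operatorname{ad}X$ is self-adjoint with respect to $\langle,\rangle$ for every $X\in\mathfrak{a}$. *)

(* Defs.v *)
(* A real Lie algebra of dimension n is modelled on row
   vectors 'rV[R]_n, with bracket given by structure constants
   c i j = [e_i, e_j]; a metric is a symmetric invertible Gram matrix G. *)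
From HB Require Import structures.
From mathcomp Require Import all_boot all_order all_algebra.
From mathcomp Require Import reals.
Set Implicit Arguments. Unset Strict Implicit. Unset Printing Implicit Defensive.
Import Order.TTheory GRing.Theory Num.Theory.
Local Open Scope ring_scope.

Section MetricLie.
Variable R : fieldType.

Section Fixed.
Variable n : nat.
Implicit Types (c : 'I_n -> 'I_n -> 'rV[R]_n) (G : 'M[R]_n) (u v X Y Z : 'rV[R]_n).

(* matrix of ad u in the row-vector convention: ad u (v) = v *m adm c u *)
Definition adm c u : 'M[R]_n := \matrix_(j < n) (\sum_(i < n) u 0 i *: c i j).

Definition lbr c u v : 'rV[R]_n := v *m adm c u.

Definition ip G u v : R := (u *m G *m v^T) 0 0.

Definition is_metric G : Prop := G^T = G /\ G \in unitmx.

Definition is_lie_algebra c : Prop :=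
  (forall u v, lbr c u v = - lbr c v u) /\
  (forall u v w, lbr c u (lbr c v w) + lbr c v (lbr c w u)
                 + lbr c w (lbr c u v) = 0).

(* Levi-Civita connection of the left-invariant metric (Koszul formula):
   2 <nabla_X Y, Z> = <[X,Y],Z> - <[Y,Z],X> + <[Z,X],Y> *)
Definition koszul c G X Y Z : R :=
  (ip G (lbr c X Y) Z - ip G (lbr c Y Z) X + ip G (lbr c Z X) Y) / 2%:R.

Definition nabla c G X Y : 'rV[R]_n :=
  (\row_k koszul c G X Y (delta_mx 0 k)) *m invmx G.

Definition curv c G X Y Z : 'rV[R]_n :=
  nabla c G X (nabla c G Y Z) - nabla c G Y (nabla c G X Z)
  - nabla c G (lbr c X Y) Z.

Definition ric c G Y Z : R := \sum_(k < n) (curv c G (delta_mx 0 k) Y Z) 0 k.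

(* Ricci operator: <Ric Y, Z> = ric(Y, Z) *)
Definition Ricop c G Y : 'rV[R]_n :=
  (\row_k ric c G Y (delta_mx 0 k)) *m invmx G.

(* subspaces are row spaces of matrices (mxalgebra) *)
Definition is_ideal c (g : 'M[R]_n) : Prop :=
  forall x u, (u <= g)%MS -> (lbr c x u <= g)%MS.

(* the subalgebra g is nilpotent: its lower central series vanishes,
   i.e. all iterated brackets [y1,[y2,...,[yk,x]]] with entries in g vanish *)
Definition is_nilpotent_sub c (g : 'M[R]_n) : Prop :=
  exists k : nat, forall (s : seq 'rV[R]_n) (x : 'rV[R]_n),
    size s = k -> all (fun y => (y <= g)%MS) s -> (x <= g)%MS ->
    foldr (lbr c) x s = 0.

Definition is_abelian_sub c (a : 'M[R]_n) : Prop :=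
  forall u v, (u <= a)%MS -> (v <= a)%MS -> lbr c u v = 0.

Fixpoint derived c (k : nat) : 'M[R]_n :=
  match k with
  | 0 => 1%:M
  | k'.+1 => let D := derived c k' in
      (\sum_(i < n) \sum_(j < n) <<lbr c (row i D) (row j D)>>)%MS
  end.

Definition is_solvable c : Prop := exists k, \rank (derived c k) = 0%N.

Definition pseudo_iwasawa c G (g a : 'M[R]_n) : Prop :=
  (g + a == 1%:M)%MS /\ mxdirect (g + a) /\
  (forall u v, (u <= g)%MS -> (v <= a)%MS -> ip G u v = 0) /\
  is_ideal c g /\ is_nilpotent_sub c g /\
  is_abelian_sub c a /\
  (forall X u v, (X <= a)%MS -> ip G (lbr c X u) v = ip G u (lbr c X v)).

End Fixed.

(* Transport to coordinates w.r.t. a basis B : 'M_(m, n) of a subalgebra. *)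
Definition restr_sc n m (c : 'I_n -> 'I_n -> 'rV[R]_n) (B : 'M[R]_(m, n))
  : 'I_m -> 'I_m -> 'rV[R]_m :=
  fun i j => lbr c (row i B) (row j B) *m pinvmx B.

Definition restr_metric n m (G : 'M[R]_n) (B : 'M[R]_(m, n)) : 'M[R]_m :=
  B *m G *m B^T.

(* matrix (row convention) of an endomorphism A preserving <<B>> restricted *)
Definition restr_op n m (A : 'M[R]_n) (B : 'M[R]_(m, n)) : 'M[R]_m :=
  B *m A *m pinvmx B.

End MetricLie.

(* Main.v *)
Require Import Defs.
From HB Require Import structures.
From mathcomp Require Import all_boot all_order all_algebra.
From mathcomp Require Import reals.
From mathcomp Require Import ring lra.
From mathcomp Require Import complex.
Import Order.TTheory GRing.Theory Num.Theory.
Set Implicit Arguments. Unset Strict Implicit. Unset Printing Implicit Defensive.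
Local Open Scope ring_scope.

Section Gen.
Variable R : realType.
Variable n : nat.
Variable c : 'I_n -> 'I_n -> 'rV[R]_n.
Variable G : 'M[R]_n.
Implicit Types (u v w X Y Z U V W T : 'rV[R]_n) (a b : R).

Lemma admE u : adm c u = \matrix_(j < n) (\sum_(i < n) u 0 i *: c i j).
Proof. by []. Qed.

Lemma adm_row u j : row j (adm c u) = \sum_(i < n) u 0 i *: c i j.
Proof. by apply/rowP => k; rewrite !mxE. Qed.

Lemma admD u v : adm c (u + v) = adm c u + adm c v.
Proof.
apply/row_matrixP => j; rewrite linearD /= !adm_row -big_split /=.
by apply: eq_bigr => i _; rewrite mxE scalerDl.
Qed.

Lemma admZ a u : adm c (a *: u) = a *: adm c u.
Proof.
apply/row_matrixP => j; rewrite linearZ /= !adm_row scaler_sumr.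
by apply: eq_bigr => i _; rewrite mxE scalerA.
Qed.

Lemma adm0 : adm c 0 = 0.
Proof. by rewrite -(scale0r 0) admZ scale0r. Qed.

Lemma admN u : adm c (- u) = - adm c u.
Proof. by rewrite -scaleN1r admZ scaleN1r. Qed.

Lemma admB u v : adm c (u - v) = adm c u - adm c v.
Proof. by rewrite admD admN. Qed.

Lemma lbrDl u v w : lbr c (u + v) w = lbr c u w + lbr c v w.
Proof. by rewrite /lbr admD mulmxDr. Qed.
Lemma lbrZl a u w : lbr c (a *: u) w = a *: lbr c u w.
Proof. by rewrite /lbr admZ scalemxAr. Qed.
Lemma lbrNl u w : lbr c (- u) w = - lbr c u w.
Proof. by rewrite /lbr admN mulmxN. Qed.
Lemma lbrBl u v w : lbr c (u - v) w = lbr c u w - lbr c v w.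
Proof. by rewrite lbrDl lbrNl. Qed.
Lemma lbr0l w : lbr c 0 w = 0.
Proof. by rewrite /lbr adm0 mulmx0. Qed.
Lemma lbrDr u v w : lbr c w (u + v) = lbr c w u + lbr c w v.
Proof. by rewrite /lbr mulmxDl. Qed.
Lemma lbrZr a u w : lbr c w (a *: u) = a *: lbr c w u.
Proof. by rewrite /lbr scalemxAl. Qed.
Lemma lbrNr u w : lbr c w (- u) = - lbr c w u.
Proof. by rewrite /lbr mulNmx. Qed.
Lemma lbrBr u v w : lbr c w (u - v) = lbr c w u - lbr c w v.
Proof. by rewrite lbrDr lbrNr. Qed.
Lemma lbr0r w : lbr c w 0 = 0.
Proof. by rewrite /lbr mul0mx. Qed.

Lemma ipDl u v w : ip G (u + v) w = ip G u w + ip G v w.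
Proof. by rewrite /ip !mulmxDl mxE. Qed.
Lemma ipZl a u w : ip G (a *: u) w = a * ip G u w.
Proof. by rewrite /ip -!scalemxAl mxE. Qed.
Lemma ipNl u w : ip G (- u) w = - ip G u w.
Proof. by rewrite -scaleN1r ipZl mulN1r. Qed.
Lemma ipBl u v w : ip G (u - v) w = ip G u w - ip G v w.
Proof. by rewrite ipDl ipNl. Qed.
Lemma ip0l w : ip G 0 w = 0.
Proof. by rewrite /ip !mul0mx mxE. Qed.
Lemma ipDr u v w : ip G w (u + v) = ip G w u + ip G w v.
Proof. by rewrite /ip linearD /= mulmxDr mxE. Qed.
Lemma ipZr a u w : ip G w (a *: u) = a * ip G w u.
Proof. by rewrite /ip linearZ /= -scalemxAr mxE. Qed.
Lemma ipNr u w : ip G w (- u) = - ip G w u.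
Proof. by rewrite -scaleN1r ipZr mulN1r. Qed.
Lemma ipBr u v w : ip G w (u - v) = ip G w u - ip G w v.
Proof. by rewrite ipDr ipNr. Qed.
Lemma ip0r w : ip G w 0 = 0.
Proof. by rewrite /ip trmx0 mulmx0 mxE. Qed.

Lemma ip_delta u k : ip G u (delta_mx 0 k) = (u *m G) 0 k.
Proof. by rewrite /ip trmx_delta -colE mxE. Qed.

Lemma AC3 (V : zmodType) (a1 bt1 c1 d1 e1 f1 : V) :
  (a1 + bt1) - (c1 + d1) - (e1 + f1) = (a1 - c1 - e1) + (bt1 - d1 - f1).
Proof. by rewrite !opprD (addrACA a1) (addrACA (a1 - c1)). Qed.

Lemma koszulDl X X' Y Z : koszul c G (X + X') Y Z = koszul c G X Y Z + koszul c G X' Y Z.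
Proof. rewrite /koszul !(lbrDl, lbrDr, ipDl, ipDr); ring. Qed.
Lemma koszulZl a X Y Z : koszul c G (a *: X) Y Z = a * koszul c G X Y Z.
Proof. rewrite /koszul !(lbrZl, lbrZr, ipZl, ipZr); ring. Qed.
Lemma koszulDm X Y Y' Z : koszul c G X (Y + Y') Z = koszul c G X Y Z + koszul c G X Y' Z.
Proof. rewrite /koszul !(lbrDl, lbrDr, ipDl, ipDr); ring. Qed.
Lemma koszulZm a X Y Z : koszul c G X (a *: Y) Z = a * koszul c G X Y Z.
Proof. rewrite /koszul !(lbrZl, lbrZr, ipZl, ipZr); ring. Qed.
Lemma koszulDr X Y Z Z' : koszul c G X Y (Z + Z') = koszul c G X Y Z + koszul c G X Y Z'.
Proof. rewrite /koszul !(lbrDl, lbrDr, ipDl, ipDr); ring. Qed.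
Lemma koszulZr a X Y Z : koszul c G X Y (a *: Z) = a * koszul c G X Y Z.
Proof. rewrite /koszul !(lbrZl, lbrZr, ipZl, ipZr); ring. Qed.

Lemma nablaDl X X' Y : nabla c G (X + X') Y = nabla c G X Y + nabla c G X' Y.
Proof. by rewrite /nabla -mulmxDl; congr (_ *m _); apply/rowP => k; rewrite !mxE koszulDl. Qed.
Lemma nablaZl a X Y : nabla c G (a *: X) Y = a *: nabla c G X Y.
Proof. by rewrite /nabla scalemxAl; congr (_ *m _); apply/rowP => k; rewrite !mxE koszulZl. Qed.
Lemma nablaDr X Y Y' : nabla c G X (Y + Y') = nabla c G X Y + nabla c G X Y'.
Proof. by rewrite /nabla -mulmxDl; congr (_ *m _); apply/rowP => k; rewrite !mxE koszulDm. Qed.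
Lemma nablaZr a X Y : nabla c G X (a *: Y) = a *: nabla c G X Y.
Proof. by rewrite /nabla scalemxAl; congr (_ *m _); apply/rowP => k; rewrite !mxE koszulZm. Qed.
Lemma nabla0l Y : nabla c G 0 Y = 0.
Proof. by rewrite -[X in nabla c G X Y](scale0r (0 : 'rV[R]_n)) nablaZl scale0r. Qed.
Lemma nabla0r X : nabla c G X 0 = 0.
Proof. by rewrite -[Y in nabla c G X Y](scale0r (0 : 'rV[R]_n)) nablaZr scale0r. Qed.
Lemma nablaNl X Y : nabla c G (- X) Y = - nabla c G X Y.
Proof. by rewrite -scaleN1r nablaZl scaleN1r. Qed.
Lemma nablaNr X Y : nabla c G X (- Y) = - nabla c G X Y.
Proof. by rewrite -scaleN1r nablaZr scaleN1r. Qed.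
Lemma nablaBl X X' Y : nabla c G (X - X') Y = nabla c G X Y - nabla c G X' Y.
Proof. by rewrite nablaDl nablaNl. Qed.
Lemma nablaBr X Y Y' : nabla c G X (Y - Y') = nabla c G X Y - nabla c G X Y'.
Proof. by rewrite nablaDr nablaNr. Qed.

Lemma curvDl U U' Y Z : curv c G (U + U') Y Z = curv c G U Y Z + curv c G U' Y Z.
Proof. by rewrite /curv !(nablaDl, nablaDr, lbrDl) AC3. Qed.
Lemma curvDm U Y Y' Z : curv c G U (Y + Y') Z = curv c G U Y Z + curv c G U Y' Z.
Proof. by rewrite /curv !(nablaDl, nablaDr, lbrDr) AC3. Qed.
Lemma curvDr U Y Z Z' : curv c G U Y (Z + Z') = curv c G U Y Z + curv c G U Y Z'.
Proof. by rewrite /curv !nablaDr AC3. Qed.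
Lemma curvZl a U Y Z : curv c G (a *: U) Y Z = a *: curv c G U Y Z.
Proof. by rewrite /curv !(nablaZl, nablaZr, lbrZl) !scalerBr. Qed.
Lemma curvZm a U Y Z : curv c G U (a *: Y) Z = a *: curv c G U Y Z.
Proof. by rewrite /curv !(nablaZl, nablaZr, lbrZr) !scalerBr. Qed.
Lemma curvZr a U Y Z : curv c G U Y (a *: Z) = a *: curv c G U Y Z.
Proof. by rewrite /curv !nablaZr !scalerBr. Qed.

Lemma ricDl Y Y' Z : ric c G (Y + Y') Z = ric c G Y Z + ric c G Y' Z.
Proof. by rewrite /ric -big_split; apply: eq_bigr => k _; rewrite curvDm mxE. Qed.
Lemma ricZl a Y Z : ric c G (a *: Y) Z = a * ric c G Y Z.
Proof. by rewrite /ric mulr_sumr; apply: eq_bigr => k _; rewrite curvZm mxE. Qed.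
Lemma ricDr Y Z Z' : ric c G Y (Z + Z') = ric c G Y Z + ric c G Y Z'.
Proof. by rewrite /ric -big_split; apply: eq_bigr => k _; rewrite curvDr mxE. Qed.
Lemma ricZr a Y Z : ric c G Y (a *: Z) = a * ric c G Y Z.
Proof. by rewrite /ric mulr_sumr; apply: eq_bigr => k _; rewrite curvZr mxE. Qed.


Lemma rv_sum u : u = \sum_(i < n) u 0 i *: delta_mx 0 i.
Proof. by rewrite {1}(matrix_sum_delta u) big_ord1. Qed.

Lemma ric0r Y : ric c G Y 0 = 0.
Proof. by rewrite -[Z in ric c G Y Z](scale0r (0 : 'rV[R]_n)) ricZr mul0r. Qed.

Lemma ric_rv Y Z : ric c G Y Z = \sum_k Z 0 k * ric c G Y (delta_mx 0 k).
Proof.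
rewrite {1}(rv_sum Z) (big_morph _ (ricDr Y) (ric0r Y)).
by apply: eq_bigr => k _; rewrite ricZr.
Qed.

Lemma koszul0r X Y : koszul c G X Y 0 = 0.
Proof. by rewrite -[Z in koszul c G X Y Z](scale0r (0 : 'rV[R]_n)) koszulZr mul0r. Qed.

Lemma koszul_rv X Y Z : koszul c G X Y Z = \sum_k Z 0 k * koszul c G X Y (delta_mx 0 k).
Proof.
rewrite {1}(rv_sum Z) (big_morph _ (koszulDr X Y) (koszul0r X Y)).
by apply: eq_bigr => k _; rewrite koszulZr.
Qed.

Section Unit.
Hypothesis uG : G \in unitmx.

Lemma ip_rv w Z : ip G (w *m invmx G) Z = \sum_k w 0 k * Z 0 k.
Proof.
rewrite /ip mulmxKV // mxE; by apply: eq_bigr => k _; rewrite mxE.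
Qed.

Lemma nablaP X Y Z : ip G (nabla c G X Y) Z = koszul c G X Y Z.
Proof.
rewrite /nabla ip_rv koszul_rv; apply: eq_bigr => k _; by rewrite mxE mulrC.
Qed.

Lemma RicopP Y Z : ip G (Ricop c G Y) Z = ric c G Y Z.
Proof.
rewrite /Ricop ip_rv ric_rv; apply: eq_bigr => k _; by rewrite mxE mulrC.
Qed.

Lemma ip_inj u v : (forall k, ip G u (delta_mx 0 k) = ip G v (delta_mx 0 k)) -> u = v.
Proof.
move=> H; apply: (can_inj (mulmxK uG)); apply/rowP => k.
by rewrite -!ip_delta H.
Qed.

Lemma ip_injZ u v : (forall Z, ip G u Z = ip G v Z) -> u = v.
Proof. by move=> H; apply: ip_inj => k; rewrite H. Qed.

Lemma nabla_uniq X Y w : (forall Z, ip G w Z = koszul c G X Y Z) -> nabla c G X Y = w.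
Proof. by move=> H; apply: ip_injZ => Z; rewrite nablaP H. Qed.

Lemma Ricop_iff Y Q : Ricop c G Y = Q <-> (forall Z, ric c G Y Z = ip G Q Z).
Proof.
split; first by move=> <- Z; rewrite RicopP.
by move=> H; apply: ip_injZ => Z; rewrite RicopP H.
Qed.

End Unit.

Definition matm (f : 'rV[R]_n -> 'rV[R]_n) : 'M[R]_n :=
  \matrix_(i, j) f (delta_mx 0 i) 0 j.
Definition trf f := \tr (matm f).
Definition linf (f : 'rV[R]_n -> 'rV[R]_n) :=
  (forall u v, f (u + v) = f u + f v) /\ (forall a u, f (a *: u) = a *: f u).

Lemma trfE f : trf f = \sum_i f (delta_mx 0 i) 0 i.
Proof. by rewrite /trf /mxtrace; apply: eq_bigr => i _; rewrite mxE. Qed.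

Lemma ric_trf Y Z : ric c G Y Z = trf (fun U => curv c G U Y Z).
Proof. by rewrite trfE. Qed.

Lemma row_matm f i : row i (matm f) = f (delta_mx 0 i).
Proof. by apply/rowP => j; rewrite !mxE. Qed.

Lemma linf0 f : linf f -> f 0 = 0.
Proof. by case=> _ fZ; rewrite -[X in f X](scale0r (0 : 'rV[R]_n)) fZ scale0r. Qed.

Lemma linf_sum f (F : 'I_n -> 'rV[R]_n) : linf f ->
  f (\sum_i F i) = \sum_i f (F i).
Proof. by move=> lf; rewrite (big_morph f (proj1 lf) (linf0 lf)). Qed.

Lemma matm_mul f u : linf f -> u *m matm f = f u.
Proof.
move=> lf; rewrite mulmx_sum_row {2}(rv_sum u) linf_sum //.
by apply: eq_bigr => i _; rewrite row_matm (proj2 lf).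
Qed.

Lemma matm_comp f h : linf f -> matm (fun u => f (h u)) = matm h *m matm f.
Proof. by move=> lf; apply/row_matrixP => i; rewrite row_mul !row_matm matm_mul. Qed.

Lemma trf_comp f h : linf f -> linf h ->
  trf (fun u => f (h u)) = trf (fun u => h (f u)).
Proof. by move=> lf lh; rewrite /trf (matm_comp h lf) (matm_comp f lh) mxtrace_mulC. Qed.

Lemma matm_mx M : matm (fun u => u *m M) = M.
Proof. by apply/row_matrixP => i; rewrite row_matm rowE. Qed.

Lemma trf_mx M : trf (fun u => u *m M) = \tr M.
Proof. by rewrite /trf matm_mx. Qed.

Lemma linf_mx M : linf (fun u => u *m M).
Proof. by split=> [u v|a u]; rewrite ?mulmxDl ?scalemxAl. Qed.

Lemma trf_ext f h : (forall u, f u = h u) -> trf f = trf h.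
Proof. by move=> H; rewrite !trfE; apply: eq_bigr => i _; rewrite H. Qed.

Lemma trfD f h : trf (fun u => f u + h u) = trf f + trf h.
Proof. by rewrite !trfE -big_split; apply: eq_bigr => i _; rewrite mxE. Qed.

Lemma trfN f : trf (fun u => - f u) = - trf f.
Proof. by rewrite !trfE -sumrN; apply: eq_bigr => i _; rewrite mxE. Qed.

Lemma trfB f h : trf (fun u => f u - h u) = trf f - trf h.
Proof. by rewrite trfD trfN. Qed.

Lemma trfZ a f : trf (fun u => a *: f u) = a * trf f.
Proof. by rewrite !trfE mulr_sumr; apply: eq_bigr => i _; rewrite mxE. Qed.

Lemma trf0 : trf (fun _ => 0) = 0.
Proof. by rewrite trfE big1 // => i _; rewrite mxE. Qed.


Definition ctr (bt : 'rV[R]_n -> 'rV[R]_n -> R) :=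
  \sum_(k < n) \sum_(l < n) bt (delta_mx 0 k) (delta_mx 0 l) * invmx G l k.

Lemma ctr_ext bt1 bt2 : (forall U T, bt1 U T = bt2 U T) -> ctr bt1 = ctr bt2.
Proof. by move=> H; apply: eq_bigr => k _; apply: eq_bigr => l _; rewrite H. Qed.

Lemma ctrD bt1 bt2 : ctr (fun U T => bt1 U T + bt2 U T) = ctr bt1 + ctr bt2.
Proof.
rewrite /ctr -big_split; apply: eq_bigr => k _; rewrite -big_split.
by apply: eq_bigr => l _; rewrite mulrDl.
Qed.

Lemma ctrZ a bt1 : ctr (fun U T => a * bt1 U T) = a * ctr bt1.
Proof.
rewrite /ctr mulr_sumr; apply: eq_bigr => k _; rewrite mulr_sumr.
by apply: eq_bigr => l _; rewrite mulrA.
Qed.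

Lemma ctrN bt1 : ctr (fun U T => - bt1 U T) = - ctr bt1.
Proof.
rewrite -mulN1r -ctrZ; apply: ctr_ext => U T; by rewrite mulN1r.
Qed.

Section Unit2.
Hypothesis uG : G \in unitmx.

Lemma trf_ctr f bt : (forall k l, ip G (f (delta_mx 0 k)) (delta_mx 0 l)
                                = bt (delta_mx 0 k) (delta_mx 0 l)) ->
  trf f = ctr bt.
Proof.
move=> H; rewrite trfE; apply: eq_bigr => k _.
rewrite -{1}[f _](mulmxK uG) mxE; apply: eq_bigr => l _.
by rewrite -ip_delta H.
Qed.

Lemma ctr_self M : ctr (fun U T => ip G (U *m M) T) = \tr M.
Proof. by rewrite -(@trf_ctr (fun u => u *m M)) ?trf_mx. Qed.

Lemma ctr_adj M : ctr (fun U T => ip G U (T *m M)) = \tr M.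
Proof.
rewrite (@ctr_ext _ (fun U T => ip G (U *m (G *m M^T *m invmx G)) T)).
  by rewrite ctr_self -mulmxA mxtrace_mulC mulmxKV // mxtrace_tr.
by move=> U T; rewrite /ip trmx_mul !mulmxA mulmxKV.
Qed.

Lemma ctr_anti (A : 'M[R]_n) (gm : 'rV[R]_n -> 'rV[R]_n -> R) :
  G^T = G -> A *m G = G *m A^T ->
  (forall P Q T, gm (P + Q) T = gm P T + gm Q T) ->
  (forall a P T, gm (a *: P) T = a * gm P T) ->
  (forall P T, gm P T = - gm T P) ->
  ctr (fun U T => gm (U *m A) T) = 0.
Proof.
move=> sG sA gD gZ gA.
have g0 : forall T, gm 0 T = 0.
  by move=> T; rewrite -[X in gm X T](scale0r (0 : 'rV[R]_n)) gZ mul0r.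
have gsum : forall P T, gm P T = \sum_m P 0 m * gm (delta_mx 0 m) T.
  move=> P T; rewrite {1}(rv_sum P) (big_morph (fun P => gm P T) (fun P Q => gD P Q T) (g0 T)).
  by apply: eq_bigr => m _; rewrite gZ.
set S := invmx G *m A.
have SE : S = A^T *m invmx G.
  rewrite /S -[LHS]mulmx1 -(mulmxV uG) !mulmxA -(mulmxA _ A) sA.
  by rewrite !mulmxA mulVmx // mul1mx.
have Ssym : forall l m, S l m = S m l.
  move=> l m; have : S^T = S by rewrite {1}SE trmx_mul trmxK trmx_inv sG.
  by move=> /matrixP /(_ m l); rewrite mxE.
have -> : ctr (fun U T => gm (U *m A) T) =
   \sum_(l < n) \sum_(m < n) S l m * gm (delta_mx 0 m) (delta_mx 0 l).
  rewrite /ctr exchange_big /=; apply: eq_bigr => l _.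
  under eq_bigr => k _ do rewrite -rowE gsum mulr_suml.
  rewrite exchange_big /=; apply: eq_bigr => m _.
  rewrite /S mxE mulr_suml; apply: eq_bigr => k _.
  by rewrite mxE; ring.
set Tt := \sum_(l < n) _.
have : Tt = - Tt.
  rewrite {1}/Tt exchange_big /= /Tt -sumrN; apply: eq_bigr => l _.
  rewrite -sumrN; apply: eq_bigr => m _.
  by rewrite [S m l]Ssym gA mulrN.
move=> h; lra.
Qed.

End Unit2.

End Gen.

Lemma tr_nilp_C (C : closedFieldType) n (M : 'M[C]_n) m : M ^+ m = 0 -> \tr M = 0.
Proof.
move=> Mm.
case: n M Mm => [|n] M Mm; first by rewrite /mxtrace big_ord0.
have [r Er] := closed_field_poly_normal (char_poly M).
have r0 : forall z, z \in r -> z = 0.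
  move=> z zr.
  have : root (char_poly M) z by rewrite Er rootZ ?root_prod_XsubC // lead_coef_eq0 monic_neq0 // char_poly_monic.
  rewrite -eigenvalue_root_char => /eigenvalueP [v vM vnz].
  have vMk : forall k, v *m M ^+ k = z ^+ k *: v.
    elim=> [|k IH]; first by rewrite expr0 mulmx1 expr0 scale1r.
    by rewrite exprS -mulmxE mulmxA vM -scalemxAl IH scalerA -exprS.
  have := vMk m; rewrite Mm mulmx0 => /esym /eqP; rewrite scaler_eq0 (negbTE vnz) orbF.
  by rewrite expf_eq0 => /andP [_ /eqP].
have EX : char_poly M = 'X^(size r).
  rewrite Er (monicP (char_poly_monic M)) scale1r.
  rewrite (eq_big_seq (fun _ => 'X)); last by move=> z /r0 ->; rewrite subr0.
  by elim: (r) => [|z s IH]; [rewrite big_nil expr0 | rewrite big_cons IH exprS].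
have : (char_poly M)`_n = - \tr M by rewrite -char_poly_trace.
have sr : size r = n.+1.
  by have := size_char_poly M; rewrite EX size_polyXn => -[].
rewrite EX sr coefXn /= eqn_leq ltnn /=.
move=> h; apply/eqP; rewrite -oppr_eq0 -h andbF //.

Qed.

Lemma tr_nilp (R : realType) n (M : 'M[R]_n) m : M ^+ m = 0 -> \tr M = 0.
Proof.
move=> Mm.
have inj : injective (real_complex R) by move=> x y [].
apply: inj; rewrite -trace_map_mx rmorph0.
apply: (@tr_nilp_C _ _ _ m).
have -> : (map_mx (real_complex R) M) ^+ m = map_mx (real_complex R) (M ^+ m).
  elim: (m) => [|k IH]; first by rewrite !expr0 map_mx1.
  by rewrite !exprS -!mulmxE map_mxM IH.
by rewrite Mm map_mx0.
Qed.

Section Lie.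
Variable R : realType.
Variable n : nat.
Variable c : 'I_n -> 'I_n -> 'rV[R]_n.
Variables G g a : 'M[R]_n.
Variable H : 'rV[R]_n.
Hypothesis lie : is_lie_algebra c.
Hypothesis met : is_metric G.
Hypothesis pI : pseudo_iwasawa c G g a.
Hypothesis Hdef : forall v, ip G H v = \tr (adm c v).
Implicit Types (u v w X Y Z U V W T : 'rV[R]_n).

Local Notation "[ u , v ]" := (lbr c u v).
Local Notation "<< u , v >>" := (ip G u v).

Lemma antisym u v : [u, v] = - [v, u].
Proof. by case: lie => h _; apply: h. Qed.

Lemma jacobi u v w : [u, [v, w]] + [v, [w, u]] + [w, [u, v]] = 0.
Proof. by case: lie => _ h; apply: h. Qed.

Lemma sG : G^T = G. Proof. by case: met. Qed.
Lemma uG : G \in unitmx. Proof. by case: met. Qed.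

Lemma gaF : (g + a == 1%:M)%MS. Proof. by case: pI. Qed.
Lemma capga : (g :&: a = 0)%MS.
Proof. by case: pI => _ [/mxdirect_addsP]. Qed.
Lemma capag : (a :&: g = 0)%MS.
Proof. by rewrite capmxC capga. Qed.
Lemma orth u v : (u <= g)%MS -> (v <= a)%MS -> << u, v >> = 0.
Proof. by case: pI => _ [_ [h _]]; apply: h. Qed.
Lemma ideal x u : (u <= g)%MS -> ([x, u] <= g)%MS.
Proof. by case: pI => _ [_ [_ [h _]]]; apply: h. Qed.
Lemma nilp : is_nilpotent_sub c g.
Proof. by case: pI => _ [_ [_ [_ [h _]]]]. Qed.
Lemma abel u v : (u <= a)%MS -> (v <= a)%MS -> [u, v] = 0.
Proof. by case: pI => _ [_ [_ [_ [_ [h _]]]]]; apply: h. Qed.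
Lemma sadj X u v : (X <= a)%MS -> << [X, u], v >> = << u, [X, v] >>.
Proof. by case: pI => _ [_ [_ [_ [_ [_ h]]]]]; apply: h. Qed.

Definition pg := proj_mx g a.
Definition pa := proj_mx a g.

Lemma in_ga m (u : 'M[R]_(m, n)) : (u <= g + a)%MS.
Proof. by case/andP: gaF => _ h; exact: submx_trans (submx1 u) h. Qed.

Lemma dec m (u : 'M[R]_(m, n)) : u = u *m pg + u *m pa.
Proof. by rewrite /pg /pa add_proj_mx // ?capga // in_ga. Qed.

Lemma pg_sub m (u : 'M[R]_(m, n)) : (u *m pg <= g)%MS.
Proof. exact: proj_mx_sub. Qed.
Lemma pa_sub m (u : 'M[R]_(m, n)) : (u *m pa <= a)%MS.
Proof. exact: proj_mx_sub. Qed.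
Lemma pg_id m (u : 'M[R]_(m, n)) : (u <= g)%MS -> u *m pg = u.
Proof. by move=> h; rewrite /pg proj_mx_id // capga. Qed.
Lemma pa_id m (u : 'M[R]_(m, n)) : (u <= a)%MS -> u *m pa = u.
Proof. by move=> h; rewrite /pa proj_mx_id // capag. Qed.
Lemma pg_a m (u : 'M[R]_(m, n)) : (u <= a)%MS -> u *m pg = 0.
Proof. by move=> h; rewrite /pg proj_mx_0 // capga. Qed.
Lemma pa_g m (u : 'M[R]_(m, n)) : (u <= g)%MS -> u *m pa = 0.
Proof. by move=> h; rewrite /pa proj_mx_0 // capag. Qed.

Lemma ipC u v : << u, v >> = << v, u >>.
Proof.
rewrite /ip; have -> : (u *m G *m v^T) 0 0 = ((u *m G *m v^T)^T) 0 0 by rewrite [RHS]mxE.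
by rewrite !trmx_mul trmxK sG mulmxA.
Qed.

Lemma orth' u v : (u <= a)%MS -> (v <= g)%MS -> << u, v >> = 0.
Proof. by move=> ua vg; rewrite ipC orth. Qed.

Lemma nondeg_g u : (u <= g)%MS -> (forall v, (v <= g)%MS -> << u, v >> = 0) -> u = 0.
Proof.
move=> ug h; apply: (ip_injZ uG) => Z.
by rewrite ip0l (dec Z) ipDr h ?pg_sub // orth ?pa_sub // addr0.
Qed.

Lemma subD m (u v : 'M[R]_(m, n)) (S : 'M[R]_n) : (u <= S)%MS -> (v <= S)%MS -> ((u + v)%R <= S)%MS.
Proof. exact: addmx_sub. Qed.
Lemma subN m (u : 'M[R]_(m, n)) (S : 'M[R]_n) : (u <= S)%MS -> ((- u)%R <= S)%MS.
Proof. by rewrite eqmx_opp. Qed.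
Lemma subZ m x (u : 'M[R]_(m, n)) (S : 'M[R]_n) : (u <= S)%MS -> (x *: u <= S)%MS.
Proof. exact: scalemx_sub. Qed.

Lemma lbr_g u v : ([u, v] <= g)%MS.
Proof.
rewrite (dec u) lbrDl; apply: subD; first by rewrite antisym subN // ideal // pg_sub.
rewrite (dec v) lbrDr (@abel (u *m pa) (v *m pa)) ?pa_sub // addr0; exact/ideal/pg_sub.
Qed.

Lemma mx_entry (M : 'M[R]_n) i j : M i j = ((delta_mx 0 i : 'rV[R]_n) *m M *m (delta_mx 0 j : 'rV[R]_n)^T) 0 0.
Proof. by rewrite -rowE trmx_delta -colE !mxE. Qed.

Lemma sadj_mx X : (X <= a)%MS -> adm c X *m G = G *m (adm c X)^T.
Proof.
move=> Xa; apply/matrixP => i j; rewrite !mx_entry !mulmxA.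
have := sadj (delta_mx 0 i) (delta_mx 0 j) Xa; rewrite /ip /lbr => ->.
by rewrite trmx_mul !mulmxA.
Qed.

Lemma lbr_self u : [u, u] = 0.
Proof.
have : (2%:R : R) *: [u, u] = 0 by rewrite scaler_nat mulr2n {1}(antisym u u) addNr.
by move/eqP; rewrite scaler_eq0 pnatr_eq0 /= => /eqP.
Qed.

Definition dead j w := forall t : seq 'rV[R]_n, size t = j ->
  all (fun y => (y <= g)%MS) t -> foldr (lbr c) w t = 0.

Lemma foldrD w w' t : foldr (lbr c) (w + w') t = foldr (lbr c) w t + foldr (lbr c) w' t.
Proof. by elim: t => //= y t IH; rewrite IH lbrDr. Qed.
Lemma foldrZ x w t : foldr (lbr c) (x *: w) t = x *: foldr (lbr c) w t.
Proof. by elim: t => //= y t IH; rewrite IH lbrZr. Qed.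
Lemma foldr0 t : foldr (lbr c) 0 t = 0.
Proof. by elim: t => //= y t IH; rewrite IH lbr0r. Qed.

Lemma deadD j w w' : dead j w -> dead j w' -> dead j (w + w').
Proof. by move=> h h' t st at_; rewrite foldrD h // h' // addr0. Qed.
Lemma deadZ j x w : dead j w -> dead j (x *: w).
Proof. by move=> h t st at_; rewrite foldrZ h // scaler0. Qed.

Lemma deadS j w : dead j.+1 w <-> (forall y, (y <= g)%MS -> dead j [y, w]).
Proof.
split=> [h y yg t st at_ | h t].
  by rewrite -foldr_rcons h ?size_rcons ?st // all_rcons yg.
case/lastP: t => [|t y] //; rewrite size_rcons all_rcons foldr_rcons => -[st] /andP[yg at_].
exact: h.
Qed.

Lemma dead0 w : dead 0 w -> w = 0.
Proof. by move=> h; apply: (h [::]). Qed.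

Lemma dead_der X j w : dead j w -> dead j [X, w].
Proof.
elim: j w => [|j IH] w.
  by move=> /dead0 ->; rewrite lbr0r => t /size0nil -> _.
move=> /deadS h; apply/deadS => y yg.
have -> : [y, [X, w]] = [X, [y, w]] + [[y, X], w].
  have := jacobi y X w; rewrite (antisym w y) lbrNr (antisym w) => /eqP.
  by rewrite -addrA -opprD subr_eq0 => /eqP.
by apply: deadD; [exact/IH/h | exact/h/lbr_g].
Qed.

Lemma dead_all w : exists j, dead j w.
Proof.
case: nilp => k hk; exists k.+1; apply/deadS => y yg t st at_.
exact: hk (lbr_g y w).
Qed.

Lemma ad_nilp (M : 'M[R]_n) : (forall j u, dead j.+1 u -> dead j (u *m M)) ->
  exists m, M ^+ m = 0.
Proof.
move=> hM.
have key : forall j u, dead j u -> u *m M ^+ j = 0.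
  elim=> [|j IH] u; first by move=> /dead0 ->; rewrite mul0mx.
  by move=> h; rewrite exprS -mulmxE mulmxA; apply/IH/hM.
case: nilp => k hk; exists k.+1; apply/row_matrixP => i; rewrite rowE row0.
apply: key; apply/deadS => y yg t st at_; exact: hk (lbr_g y _).
Qed.

Lemma tr_adm_g v : (v <= g)%MS -> \tr (adm c v) = 0.
Proof.
move=> vg; have [m hm] : exists m, adm c v ^+ m = 0.
  by apply: ad_nilp => j u /deadS h; apply: h.
exact: tr_nilp hm.
Qed.

Lemma killing V X : (V <= g)%MS -> \tr (adm c V *m adm c X) = 0.
Proof.
move=> Vg; have [m hm] : exists m, (adm c V *m adm c X) ^+ m = 0.
  by apply: ad_nilp => j u /deadS h; rewrite mulmxA; apply/dead_der/h.
exact: tr_nilp hm.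
Qed.

Lemma killing' V X : (V <= g)%MS -> \tr (adm c X *m adm c V) = 0.
Proof. by move=> Vg; rewrite mxtrace_mulC killing. Qed.

Lemma Ha : (H <= a)%MS.
Proof.
have h0 : H *m pg = 0.
  apply: nondeg_g; first exact: pg_sub.
  by move=> v vg; have := Hdef v; rewrite tr_adm_g // {1}(dec H) ipDl (@orth' (H *m pa) v) ?pa_sub // addr0.
by rewrite (dec H) h0 add0r pa_sub.
Qed.



Local Notation nab := (nabla c G).

Lemma nabla_a X Y : (X <= a)%MS -> nab X Y = 0.
Proof.
move=> Xa; apply: (nabla_uniq uG) => Z; rewrite ip0l /koszul.
rewrite (sadj _ _ Xa) (ipC Y) (antisym X Z) ipNl (orth (lbr_g Y Z) Xa).
by rewrite subr0 addNr mul0r.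
Qed.

Lemma nabla_ga Y X : (X <= a)%MS -> nab Y X = [Y, X].
Proof.
move=> Xa; apply: (nabla_uniq uG) => Z; rewrite /koszul.
rewrite (sadj _ _ Xa) (ipC Z) (antisym X Y) ipNl (orth (lbr_g Z Y) Xa).
lra.
Qed.

Lemma ipH_nabla V W : (V <= g)%MS -> (W <= g)%MS -> << nab V W, H >> = << [H, V], W >>.
Proof.
move=> Vg Wg; rewrite (nablaP c uG) /koszul (orth (lbr_g V W) Ha).
rewrite (antisym W H) ipNl (sadj _ _ Ha) (ipC W).
lra.
Qed.

Lemma lbrE u v : [u, v] = v *m adm c u.
Proof. by []. Qed.

Lemma ctr_selfM (M : 'M[R]_n) bt : (forall U T, bt U T = << U *m M, T >>) -> ctr G bt = \tr M.
Proof. by move=> h; rewrite (ctr_ext G h) (ctr_self uG). Qed.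

Lemma ctr_adjM (M : 'M[R]_n) bt : (forall U T, bt U T = << U, T *m M >>) -> ctr G bt = \tr M.
Proof. by move=> h; rewrite (ctr_ext G h) (ctr_adj uG). Qed.

Lemma ctr_brA (A : 'M[R]_n) x W0 bt : A *m G = G *m A^T ->
  (forall U T, bt U T = x * << [U *m A, T], W0 >>) -> ctr G bt = 0.
Proof.
move=> hA h; rewrite (ctr_ext G h).
apply: (ctr_anti uG sG hA (gm := fun P T => x * << [P, T], W0 >>)).
- by move=> P Q T; rewrite lbrDl ipDl mulrDr.
- by move=> y P T; rewrite lbrZl ipZl; ring.
- by move=> P T; rewrite antisym ipNl mulrN.
Qed.

Lemma ctr_br X x W0 bt : (X <= a)%MS ->
  (forall U T, bt U T = x * << [U *m adm c X, T], W0 >>) -> ctr G bt = 0.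
Proof. by move=> Xa; apply: ctr_brA; apply: sadj_mx. Qed.

Lemma ctr_brI x W0 bt : (forall U T, bt U T = x * << [U, T], W0 >>) -> ctr G bt = 0.
Proof.
move=> h; apply: (@ctr_brA 1%:M x W0) => [|U T]; first by rewrite mul1mx trmx1 mulmx1.
by rewrite mulmx1 h.
Qed.

Lemma ric_aa X X' : (X <= a)%MS -> (X' <= a)%MS ->
  ric c G X X' = - \tr (adm c X *m adm c X').
Proof.
move=> Xa X'a; rewrite (ric_trf c) (@trf_ext _ _ _ (fun U => - (U *m (adm c X *m adm c X')))).
  by rewrite trfN trf_mx.
move=> U; rewrite /curv (nabla_a X' Xa) nabla0r (nabla_a _ Xa) (nabla_ga _ X'a).
by rewrite subrr sub0r mulmxA -!lbrE (antisym (lbr c U X) X') (antisym U X) lbrNr opprK.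
Qed.

Lemma ric_ag X V : (X <= a)%MS -> (V <= g)%MS -> ric c G X V = 0.
Proof.
move=> Xa Vg; rewrite (ric_trf c).
rewrite (@trf_ctr _ _ _ uG _ (fun U T => (- 2%:R^-1) * (<< [[U, X], V], T >> +
   ((-1) * << [V, T], [U, X] >> + << [T, [U, X]], V >>)))); last first.
  move=> k l; rewrite /curv (nabla_a V Xa) nabla0r (nabla_a _ Xa) subrr sub0r.
  rewrite ipNl (nablaP c uG) /koszul; ring.
rewrite !ctrZ !ctrD !ctrZ.
rewrite (@ctr_selfM (adm c X *m adm c V)); last first.
  by move=> U T; rewrite mulmxA -!lbrE (antisym _ V) (antisym U X) lbrNr opprK.
rewrite (@ctr_adjM (- (adm c V *m adm c X))); last first.
  move=> U T; rewrite mulmxN mulmxA -!lbrE (antisym U X) ipNr -(sadj _ _ Xa) ipC.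
  by rewrite ipNr.
rewrite (@ctr_br X 1 V _ Xa); last first.
  by move=> U T; rewrite mul1r; rewrite -lbrE (antisym U X) lbrNr (antisym T) opprK.
by rewrite raddfN /= (killing X Vg) (killing' X Vg) oppr0 mulr0 !addr0 mulr0.
Qed.

Lemma ric_ga V X : (V <= g)%MS -> (X <= a)%MS -> ric c G V X = 0.
Proof.
move=> Vg Xa; rewrite (ric_trf c).
set W0 := [V, X].
have W0g : (W0 <= g)%MS by apply: lbr_g.
rewrite (@trf_ctr _ _ _ uG _ (fun U T => 2%:R^-1 * (<< [U, W0], T >> +
   (-1 * << [W0, T], U >> + (<< [T, U], W0 >> + (-1 * << [V, [U, X]], T >> +
   (<< [[U, X], T], V >> + (-1 * << [T, V], [U, X]>> + (- 2%:R) * << [[U, V], X], T >>)))))))); last first.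
  move=> k l; rewrite /curv !(nabla_ga _ Xa) !ipBl !(nablaP c uG) /koszul; rewrite /W0; lra.
rewrite !ctrZ !ctrD !ctrZ.
rewrite (@ctr_selfM (- adm c W0)); last first.
  by move=> U T; rewrite mulmxN -lbrE antisym.
rewrite (@ctr_adjM (adm c W0)); last by move=> U T; rewrite ipC.
rewrite (@ctr_brI (-1) W0); last by move=> U T; rewrite (antisym T) ipNl mulN1r.
rewrite (@ctr_selfM (- (adm c X *m adm c V))); last first.
  by move=> U T; rewrite mulmxN mulmxA -!lbrE (antisym U X) lbrNr.
rewrite (@ctr_br X (-1) V _ Xa); last first.
  by move=> U T; rewrite -lbrE (antisym U X) lbrNl ipNl mulN1r.
rewrite (@ctr_adjM (adm c V *m adm c X)); last first.
  move=> U T; rewrite mulmxA -!lbrE (antisym U X) ipNr ipC -(sadj _ _ Xa).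
  by rewrite (antisym T V) ipNr opprK.
rewrite (@ctr_selfM (adm c V *m adm c X)); last first.
  by move=> U T; rewrite mulmxA -!lbrE (antisym _ X) (antisym U V) lbrNr opprK.
rewrite raddfN /= (tr_adm_g W0g) (killing X Vg) raddfN /= (killing' X Vg).
by rewrite !(oppr0, mulr0, addr0, add0r).
Qed.

Lemma linf_comp (f h : 'rV[R]_n -> 'rV[R]_n) : linf f -> linf h -> linf (fun u => f (h u)).
Proof.
move=> [fD fZ] [hD hZ]; split=> [u v|x u]; by rewrite ?hD ?fD ?hZ ?fZ.
Qed.

Lemma linf_curv V W : linf (fun U => curv c G U V W).
Proof. by split=> [u v|x u]; rewrite ?curvDl ?curvZl. Qed.

Lemma trf_split (F : 'rV[R]_n -> 'rV[R]_n) : linf F ->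
  trf F = trf (fun U => F (U *m pg) *m pg) + trf (fun U => F (U *m pa) *m pa).
Proof.
move=> lF.
have e1 : forall U, F U = (F (U *m pg) *m pg + F (U *m pg) *m pa) +
                         (F (U *m pa) *m pg + F (U *m pa) *m pa).
  by move=> U; rewrite -!dec -(proj1 lF) -dec.
rewrite (trf_ext e1) !trfD.
have lFa : linf (fun U => F U *m pa) by exact: (@linf_comp (fun u => u *m pa) F (linf_mx _) lF).
have lFg : linf (fun U => F U *m pg) by exact: (@linf_comp (fun u => u *m pg) F (linf_mx _) lF).
rewrite (@trf_comp _ _ (fun U => F U *m pa) (fun U => U *m pg) lFa (linf_mx _)).
rewrite (@trf_comp _ _ (fun U => F U *m pg) (fun U => U *m pa) lFg (linf_mx _)).
rewrite (@trf_ext _ _ (fun U => F U *m pa *m pg) (fun _ => 0)); last first.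
  by move=> U; rewrite pg_a // pa_sub.
rewrite (@trf_ext _ _ (fun U => F U *m pg *m pa) (fun _ => 0)); last first.
  by move=> U; rewrite pa_g // pg_sub.
by rewrite trf0 addr0 add0r.
Qed.

Local Notation r := (\rank g).
Local Notation B := (row_base g).
Local Notation cr := (restr_sc c B).
Local Notation Gr := (restr_metric G B).
Definition Pg := pg *m pinvmx B.

Lemma B_g m (u : 'M[R]_(m, n)) : (u <= g)%MS -> (u <= B)%MS.
Proof. by rewrite eq_row_base. Qed.

Lemma coordK u : (u <= g)%MS -> u *m pinvmx B *m B = u.
Proof. by move=> ug; rewrite mulmxKpV // B_g. Qed.

Lemma yB_g (y : 'rV[R]_r) : (y *m B <= g)%MS.
Proof. by rewrite -(eq_row_base g) submxMl. Qed.

Lemma rowB_g i : (row i B <= g)%MS.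
Proof. by rewrite rowE yB_g. Qed.

Lemma PgB m (u : 'M[R]_(m, n)) : u *m Pg *m B = u *m pg.
Proof. by rewrite /Pg (mulmxA u pg) mulmxKpV // B_g // pg_sub. Qed.

Lemma BPg (y : 'rV[R]_r) : y *m B *m Pg = y.
Proof.
rewrite /Pg mulmxA pg_id ?yB_g //.
by rewrite -mulmxA mulmxVp ?row_base_free // mulmx1.
Qed.

Lemma ipr y z : ip Gr y z = << y *m B, z *m B >>.
Proof. by rewrite /ip /restr_metric (trmx_mul z B) (mulmxA y (B *m G)) (mulmxA y B G) (mulmxA (y *m B *m G)). Qed.

Lemma lbr_sumlI (F : 'I_r -> 'rV[R]_n) w : [\sum_i F i, w] = \sum_i [F i, w].
Proof.
by rewrite (big_morph (fun u => [u, w]) (fun x y => lbrDl c x y w) (lbr0l c w)).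
Qed.

Lemma lbr_sumrI (F : 'I_r -> 'rV[R]_n) w : [w, \sum_i F i] = \sum_i [w, F i].
Proof.
by rewrite (big_morph (fun u => [w, u]) (fun x y => lbrDr c x y w) (lbr0r c w)).
Qed.

Lemma lbrr y z : lbr cr y z *m B = [y *m B, z *m B].
Proof.
have -> : lbr cr y z = \sum_j z 0 j *: \sum_i y 0 i *: cr i j.
  by rewrite /lbr mulmx_sum_row; apply: eq_bigr => j _; rewrite adm_row.
rewrite [y *m B]mulmx_sum_row [z *m B]mulmx_sum_row lbr_sumlI mulmx_suml.
under [RHS]eq_bigr => i _ do rewrite lbrZl lbr_sumrI scaler_sumr.
rewrite [RHS]exchange_big /=; apply: eq_bigr => j _.
rewrite -scalemxAl mulmx_suml scaler_sumr; apply: eq_bigr => i _.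
rewrite -scalemxAl /restr_sc coordK ?lbr_g //.
by rewrite lbrZr !scalerA mulrC.
Qed.

Lemma uGr : Gr \in unitmx.
Proof.
rewrite -row_free_unit -kermx_eq0; apply/rowV0P => v; rewrite sub_kermx => /eqP vGr.
have vB0 : v *m B = 0.
  apply: (nondeg_g (yB_g v)) => w wg.
  by rewrite -(coordK wg) -ipr /ip vGr mul0mx mxE.
by apply: (row_free_inj (row_base_free g)); rewrite vB0 mul0mx.
Qed.

Lemma sGr : Gr^T = Gr.
Proof. by rewrite /restr_metric (trmx_mul (B *m G) B^T) (trmx_mul B G) trmxK sG mulmxA. Qed.

Lemma koszul_r (y z t : 'rV[R]_r) : koszul cr Gr y z t = koszul c G (y *m B) (z *m B) (t *m B).
Proof. by rewrite /koszul !ipr !lbrr. Qed.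

Lemma nabla_r (y z : 'rV[R]_r) : nabla cr Gr y z = nab (y *m B) (z *m B) *m Pg.
Proof.
apply: (nabla_uniq uGr) => t; rewrite koszul_r ipr PgB -(nablaP c uG).
by rewrite [in RHS](dec (nab _ _)) ipDl (orth' (pa_sub _) (yB_g t)) addr0.
Qed.

Definition Cg V W U := nab U (nab V W *m pg) - nab V (nab U W *m pg) - nab [U, V] W.

Lemma linf_Cg V W : linf (Cg V W).
Proof.
split=> [u v|x u]; rewrite /Cg.
  by rewrite !(nablaDl, lbrDl) mulmxDl nablaDr AC3.
by rewrite !(nablaZl, lbrZl) -scalemxAl nablaZr !scalerBr.
Qed.

Lemma curv_r (u y z : 'rV[R]_r) : curv cr Gr u y z = Cg (y *m B) (z *m B) (u *m B) *m Pg.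
Proof. by rewrite /curv !nabla_r !PgB lbrr /Cg !mulmxBl. Qed.

Lemma ric_r (y z : 'rV[R]_r) : ric cr Gr y z = trf (fun U => Cg (y *m B) (z *m B) U *m pg).
Proof.
set M := matm (Cg (y *m B) (z *m B)).
have -> : ric cr Gr y z = \tr (B *m M *m Pg).
  rewrite /ric /mxtrace; apply: eq_bigr => i _.
  rewrite curv_r -rowE -(matm_mul _ (linf_Cg _ _)) -row_mul -row_mul mxE.
  by rewrite !mxE.
rewrite -mulmxA mxtrace_mulC PgB /trf.
by rewrite (@matm_comp _ _ (fun u => u *m pg) _ (linf_mx _)) matm_mx.
Qed.

Lemma AC2 (Vt : zmodType) (a1 b1 c1 d1 e1 : Vt) :
  (a1 + b1) - (c1 + d1) - e1 = (a1 - c1 - e1) + b1 - d1.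
Proof.
by rewrite opprD !addrA (addrAC a1 b1 (- c1)) (addrAC (a1 - c1 + b1) (- d1) (- e1)) (addrAC (a1 - c1) b1 (- e1)).
Qed.

Lemma curv_Cg V W U : curv c G U V W =
  Cg V W U + [U, nab V W *m pa] - [V, nab U W *m pa].
Proof.
have e1 : forall P Q, nab P Q = nab P (Q *m pg) + [P, Q *m pa].
  by move=> P Q; rewrite {1}(dec Q) nablaDr (nabla_ga _ (pa_sub Q)).
by rewrite /curv /Cg (e1 U (nab V W)) (e1 V (nab U W)) AC2.
Qed.

Lemma ric_gg (y z : 'rV[R]_r) :
  ric c G (y *m B) (z *m B) = ric cr Gr y z - << [H, y *m B], z *m B >>.
Proof.
set V := y *m B; set W := z *m B.
have Vg : (V <= g)%MS by apply: yB_g.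
have Wg : (W <= g)%MS by apply: yB_g.
rewrite (ric_trf c) (trf_split (linf_curv V W)).
set psV := nab V W *m pa.
have psVa : (psV <= a)%MS by apply: pa_sub.
rewrite (@trf_ext _ _ _ (fun U => (Cg V W (U *m pg) *m pg + - (U *m adm c psV))
          - [V, nab (U *m pg) W *m pa])); last first.
  move=> U; rewrite curv_Cg mulmxBl mulmxDl (pg_id (lbr_g _ _)) (pg_id (lbr_g V _)); congr (_ + _ - _).
  rewrite antisym -lbrE; congr (- _).
  by rewrite {2}(dec U) lbrDr (abel psVa (pa_sub _)) addr0.
rewrite trfB trfD trfN trf_mx.
have lCg : linf (fun U => Cg V W U *m pg).
  exact: (@linf_comp (fun u => u *m pg) _ (linf_mx _) (linf_Cg V W)).
rewrite (@trf_comp _ _ (fun U => Cg V W U *m pg) (fun U => U *m pg) lCg (linf_mx _)).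
rewrite (@trf_ext _ _ (fun U => Cg V W U *m pg *m pg) (fun U => Cg V W U *m pg)); last first.
  by move=> U; rewrite pg_id // pg_sub.
rewrite -ric_r.
have lh : linf (fun U => nab (U *m pg) W *m pa).
  split=> [u v|x u]; first by rewrite mulmxDl nablaDl mulmxDl.
  by rewrite -scalemxAl nablaZl -scalemxAl.
have lf : linf (fun Y => [V, Y *m pa]).
  split=> [u v|x u]; first by rewrite mulmxDl lbrDr.
  by rewrite -scalemxAl lbrZr.
rewrite (@trf_ext _ _ (fun U => [V, nab (U *m pg) W *m pa])
   (fun U => (fun Y => [V, Y *m pa]) ((fun U => nab (U *m pg) W *m pa) U))); last first.
  by move=> U /=; rewrite pa_id // pa_sub.
rewrite (trf_comp lf lh) /=.
rewrite (@trf_ext _ _ (fun U => curv c G (U *m pa) V W *m pa)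
                      (fun Y => nab ([V, Y *m pa] *m pg) W *m pa)); last first.
  move=> U; rewrite pg_id ?lbr_g // /curv (nabla_a _ (pa_sub U)) (nabla_a W (pa_sub U)).
  by rewrite nabla0r subrr sub0r (antisym (U *m pa)) nablaNl; congr (_ *m _); exact: opprK.
have -> : \tr (adm c psV) = << [H, V], W >>.
  rewrite -Hdef ipC -(ipH_nabla Vg Wg) (dec (nab V W)) ipDl (orth (pg_sub _) Ha).
  by rewrite add0r.
by rewrite subrK.
Qed.

Lemma Dlem (y : 'rV[R]_r) : y *m restr_op (adm c H) B *m B = [H, y *m B].
Proof.
rewrite /restr_op (mulmxA y (B *m adm c H)) (mulmxA y B (adm c H)).
by rewrite (mulmxKpV (B_g (lbr_g H (y *m B)))).
Qed.

Lemma main (lambda : R) :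
  let D := restr_op (adm c H) B in
  ((forall Y, Ricop c G Y = lambda *: Y) <->
   ((forall y, Ricop cr Gr y = lambda *: y + y *m D)
    /\ (forall X Y, (X <= a)%MS -> (Y <= a)%MS ->
          \tr (adm c Y *m adm c X) = - lambda * ip G X Y)))
  /\ ((forall Y, Ricop c G Y = lambda *: Y) ->
      \tr (D *m D) = - lambda * \tr D).
Proof.
move=> D.
have Eiff : (forall Y, Ricop c G Y = lambda *: Y) <->
            (forall Y Z, ric c G Y Z = lambda * << Y, Z >>).
  split=> h Y.
    by move=> Z; have /(Ricop_iff c uG) := h Y => ->; rewrite ipZl.
  by apply/(Ricop_iff c uG) => Z; rewrite h ipZl.
have ipD : forall y t : 'rV[R]_r,
    ip Gr (lambda *: y + y *m D) t = lambda * << y *m B, t *m B >> + << [H, y *m B], t *m B >>.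
  by move=> y t; rewrite ipDl ipZl !ipr Dlem.
have Riff : forall y, Ricop cr Gr y = lambda *: y + y *m D <->
    (forall t, ric cr Gr y t = lambda * << y *m B, t *m B >> + << [H, y *m B], t *m B >>).
  move=> y; split.
    by move=> h t; have /(Ricop_iff cr uGr) := h => ->; rewrite ipD.
  by move=> h; apply/(Ricop_iff cr uGr) => t; rewrite h ipD.
split.
  split.
    move/Eiff => E; split.
      move=> y; apply/Riff => t.
      by rewrite -[ric cr Gr y t](subrK << [H, y *m B], t *m B >>) -ric_gg E.
    move=> X Y Xa Ya; rewrite mxtrace_mulC.
    by rewrite mulNr -E ric_aa // opprK.
  case=> h1 h2; apply/Eiff => Y Z.
  rewrite (dec Y) (dec Z) !(ricDl, ricDr).
  rewrite (ric_ga (pg_sub Y) (pa_sub Z)) (ric_ag (pa_sub Y) (pg_sub Z)) addr0 add0r.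
  rewrite !(ipDl, ipDr) (orth (pg_sub Y) (pa_sub Z)) (orth' (pa_sub Y) (pg_sub Z)) addr0 add0r.
  rewrite (ric_aa (pa_sub Y) (pa_sub Z)) (mxtrace_mulC (adm c (Y *m pa))) (h2 _ _ (pa_sub Y) (pa_sub Z)) mulNr opprK mulrDr; congr (_ + _).
  have eY := coordK (pg_sub Y); have eZ := coordK (pg_sub Z).
  rewrite -eY -eZ ric_gg.
  by have /Riff -> := h1 (Y *m pg *m pinvmx B); rewrite addrK.
move/Eiff => E.
have hH : \tr (adm c H *m adm c H) = - lambda * \tr (adm c H).
  by rewrite -Hdef mulNr -E (ric_aa Ha Ha) opprK.
set A := adm c H.
have Apa : A *m pa = 0.
  apply/row_matrixP => i; rewrite row_mul row0 rowE.
  by apply: pa_g; apply: lbr_g.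
have AK : A *m pinvmx B *m B = A.
  rewrite {1}(dec A) Apa addr0 mulmxKpV ?B_g ?pg_sub //.
  by rewrite {2}(dec A) Apa addr0.
rewrite /D /restr_op -/A.
move: AK hH; move: (row_base g) (pinvmx B) => Bm P AK hH.
have trD : \tr (Bm *m A *m P) = \tr A.
  by rewrite -mulmxA mxtrace_mulC AK.
rewrite trD -hH.
by rewrite -!mulmxA mxtrace_mulC !mulmxA AK -(mulmxA A A P) -(mulmxA A (A *m P) Bm) AK.
Qed.
End Lie.

Theorem theorem3p9 (R : realType) (n : nat)
  (c : 'I_n -> 'I_n -> 'rV[R]_n) (G : 'M[R]_n) (g a : 'M[R]_n)
  (H : 'rV[R]_n) (lambda : R) :
  is_lie_algebra c -> is_solvable c -> is_metric G ->
  pseudo_iwasawa c G g a ->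
  (forall v, ip G H v = \tr (adm c v)) ->
  let B := row_base g in
  let D := restr_op (adm c H) B in
  ((forall Y, Ricop c G Y = lambda *: Y) <->
   ((forall y, Ricop (restr_sc c B) (restr_metric G B) y = lambda *: y + y *m D)
    /\ (forall X Y, (X <= a)%MS -> (Y <= a)%MS ->
          \tr (adm c Y *m adm c X) = - lambda * ip G X Y)))
  /\ ((forall Y, Ricop c G Y = lambda *: Y) ->
      \tr (D *m D) = - lambda * \tr D).
Proof.
move=> lie _ met pI Hdef B D.
exact: (main lie met pI Hdef lambda).
Qed.
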